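(* Let $G=(V,w,m)$ be a locally finite connected weighted graph which is weakly spherically symmetric with respect to $x_0\in V$, and suppose $G$ satisfies $CD(K,n)$ for some $K\in\mathbb R$, $n\in(0,\infty]$. Then $G_P^{x_0}$ satisfies $CD(K,n)$.
   Context: A weighted graph is $G=(V,w,m)$ with $V$ countable, $w:V\times V\to[0,\infty)$ symmetric with $w(x,x)=0$, $m:V\to(0,\infty)$; $x\sim y$ iff $w(x,y)>0$. Laplacian $\Delta f(x)=\frac1{m(x)}\sum_yw(x,y)(f(y)-f(x))$. $2\Gamma(f,g)=\Delta(fg)-f\Delta g-g\Delta f$, $2\Gamma_2(f,g)=\Delta\Gamma(f,g)-\Gamma(f,\Delta g)-\Gamma(g,\Delta f)$, $\Gamma f=\Gamma(f,f)$, $\Gamma_2f=\Gamma_2(f,f)$; $CD(K,n)$ means $\Gamma_2f(x)\ge\frac1n(\Delta f(x))^2+K\Gamma f(x)$ for all $f$ and all vertices $x$ (with $\frac1\infty=0$). $d$ is the combinatorial distance, $S_i(x_0)=\{y:d(x_0,y)=i\}$; $m(A)=\sum_{x\in A}m(x)$, $w(A,B)=\sum_{(x,y)\in A\times B}w(x,y)$. $d_\mp^{x_0}(z)=\sum_{y\sim z,\ d(y,x_0)\lessgtr d(z,x_0)}\frac{w(y,z)}{m(z)}$. $G$ is weakly spherically symmetric w.r.t. $x_0$ if for all $y,z$ with $d(y,x_0)=d(z,x_0)$: $m(y)=m(z)$, $d_-^{x_0}(y)=d_-^{x_0}(z)$, $d_+^{x_0}(y)=d_+^{x_0}(z)$.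 $G_P^{x_0}=(V_G^{x_0},w_G^{x_0},m_G^{x_0})$ has vertex set $V_G^{x_0}=\{i\in\mathbb N_0:i\le\sup_yd(x_0,y)\}$, $w_G^{x_0}(i,j)=w(S_i(x_0),S_j(x_0))$ if $|i-j|=1$ and $0$ otherwise, $m_G^{x_0}(i)=m(S_i(x_0))$. *)

(* Defs.v *)
From Stdlib Require Import Reals List Arith ClassicalEpsilon.
Import ListNotations.
Open Scope R_scope.

Record wgraph := WGraph {
  vtx : Type;
  wt : vtx -> vtx -> R;
  ms : vtx -> R }.

Definition is_weighted_graph (G : wgraph) : Prop :=
  (exists f : vtx G -> nat, forall x y, f x = f y -> x = y) /\
  (forall x y, 0 <= wt G x y) /\
  (forall x y, wt G x y = wt G y x) /\
  (forall x, wt G x x = 0) /\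
  (forall x, 0 < ms G x).

Definition lsum {A : Type} (l : list A) (f : A -> R) : R :=
  fold_right Rplus 0 (map f l).

Definition nbr_list_spec (G : wgraph) (x : vtx G) (l : list (vtx G)) : Prop :=
  NoDup l /\ forall y, 0 < wt G x y <-> In y l.

Definition locally_finite (G : wgraph) : Prop :=
  forall x, exists l, nbr_list_spec G x l.

(** the (chosen) finite list of neighbours of x; meaningful when G is locally finite *)
Definition nbrs (G : wgraph) (x : vtx G) : list (vtx G) :=
  epsilon (inhabits nil) (nbr_list_spec G x).

Definition lap (G : wgraph) (f : vtx G -> R) (x : vtx G) : R :=
  / ms G x * lsum (nbrs G x) (fun y => wt G x y * (f y - f x)).

Definition Gam (G : wgraph) (f g : vtx G -> R) (x : vtx G) : R :=
  / 2 * (lap G (fun z => f z * g z) x - f x * lap G g x - g x * lap G f x).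

Definition Gam2 (G : wgraph) (f g : vtx G -> R) (x : vtx G) : R :=
  / 2 * (lap G (Gam G f g) x - Gam G f (lap G g) x - Gam G g (lap G f) x).

(** dimension parameter n in (0, infinity]: [Some n] is finite n, [None] is infinity *)
Definition dim_ok (n : option R) : Prop :=
  match n with Some r => 0 < r | None => True end.

Definition inv_dim (n : option R) : R :=
  match n with Some r => / r | None => 0 end.

Definition CD (G : wgraph) (K : R) (n : option R) : Prop :=
  forall (f : vtx G -> R) (x : vtx G),
    Gam2 G f f x >= inv_dim n * (lap G f x) ^ 2 + K * Gam G f f x.

Inductive walk (G : wgraph) : vtx G -> vtx G -> nat -> Prop :=
| walk_nil : forall x, walk G x x 0
| walk_cons : forall x y z k, 0 < wt G x y -> walk G y z k -> walk G x z (S k).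

Definition connected (G : wgraph) : Prop :=
  forall x y, exists k, walk G x y k.

Definition is_dist (G : wgraph) (x y : vtx G) (k : nat) : Prop :=
  walk G x y k /\ forall k', walk G x y k' -> (k <= k')%nat.

Definition dist (G : wgraph) (x y : vtx G) : nat :=
  epsilon (inhabits 0%nat) (is_dist G x y).

Definition dminus (G : wgraph) (x0 z : vtx G) : R :=
  lsum (nbrs G z) (fun y =>
    if Nat.ltb (dist G y x0) (dist G z x0) then wt G y z / ms G z else 0).

Definition dplus (G : wgraph) (x0 z : vtx G) : R :=
  lsum (nbrs G z) (fun y =>
    if Nat.ltb (dist G z x0) (dist G y x0) then wt G y z / ms G z else 0).

Definition weakly_spherically_symmetric (G : wgraph) (x0 : vtx G) : Prop :=
  forall y z, dist G y x0 = dist G z x0 ->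
    ms G y = ms G z /\ dminus G x0 y = dminus G x0 z /\ dplus G x0 y = dplus G x0 z.

(** spheres S_i(x0) as (chosen) finite lists; meaningful when finite *)
Definition sphere_spec (G : wgraph) (x0 : vtx G) (i : nat) (l : list (vtx G)) : Prop :=
  NoDup l /\ forall y, In y l <-> dist G x0 y = i.

Definition sphere (G : wgraph) (x0 : vtx G) (i : nat) : list (vtx G) :=
  epsilon (inhabits nil) (sphere_spec G x0 i).

Definition mset (G : wgraph) (A : list (vtx G)) : R := lsum A (ms G).

Definition wset (G : wgraph) (A B : list (vtx G)) : R :=
  lsum A (fun x => lsum B (fun y => wt G x y)).

Definition VP (G : wgraph) (x0 : vtx G) : Type :=
  { i : nat | exists y, (i <= dist G x0 y)%nat }.

Definition GP (G : wgraph) (x0 : vtx G) : wgraph :=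
  {| vtx := VP G x0;
     wt := fun i j =>
       if orb (Nat.eqb (S (proj1_sig i)) (proj1_sig j))
              (Nat.eqb (S (proj1_sig j)) (proj1_sig i))
       then wset G (sphere G x0 (proj1_sig i)) (sphere G x0 (proj1_sig j))
       else 0;
     ms := fun i => mset G (sphere G x0 (proj1_sig i)) |}.

(* Main.v *)
From Pilot Require Import Defs.
From Stdlib Require Import Reals List Arith ClassicalEpsilon ProofIrrelevance FunctionalExtensionality Lia Lra Classical.
Import ListNotations.
Import Pilot.Defs.
Open Scope R_scope.


Lemma lsum_nil {A} (F : A -> R) : lsum [] F = 0.
Proof. reflexivity. Qed.
Lemma lsum_cons {A} (a : A) l F : lsum (a :: l) F = F a + lsum l F.
Proof. reflexivity. Qed.

Lemma lsum_ext_in {A} (l : list A) F G :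
  (forall x, In x l -> F x = G x) -> lsum l F = lsum l G.
Proof.
  induction l; intros H; simpl; auto.
  unfold lsum in *; simpl. rewrite H by (left; auto). f_equal. apply IHl. intros; apply H; right; auto.
Qed.

Lemma lsum_plus {A} (l : list A) F G :
  lsum l (fun x => F x + G x) = lsum l F + lsum l G.
Proof. induction l; unfold lsum in *; simpl; [lra|]. rewrite IHl. lra. Qed.

Lemma lsum_scal {A} (l : list A) c F :
  lsum l (fun x => c * F x) = c * lsum l F.
Proof. induction l; unfold lsum in *; simpl; [lra|]. rewrite IHl. lra. Qed.

Lemma lsum_scal_r {A} (l : list A) c F :
  lsum l (fun x => F x * c) = lsum l F * c.
Proof. induction l; unfold lsum in *; simpl; [lra|]. rewrite IHl. lra. Qed.

Lemma lsum_zero {A} (l : list A) F : (forall x, In x l -> F x = 0) -> lsum l F = 0.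
Proof. intros H. rewrite (lsum_ext_in l F (fun _ => 0)) by auto.
  induction l; unfold lsum in *; simpl; [lra|]. rewrite IHl; [lra|]. intros; apply H; right; auto. Qed.

Lemma lsum_nonneg {A} (l : list A) F : (forall x, In x l -> 0 <= F x) -> 0 <= lsum l F.
Proof. induction l; intros H; unfold lsum in *; simpl; [lra|].
  assert (0 <= F a) by (apply H; left; auto).
  assert (0 <= fold_right Rplus 0 (map F l)) by (apply IHl; intros; apply H; right; auto). lra. Qed.

Lemma lsum_pos {A} (l : list A) F a : In a l -> (forall x, In x l -> 0 < F x) -> 0 < lsum l F.
Proof. induction l; intros Ha H; simpl in Ha; [contradiction|]. unfold lsum in *; simpl.
  assert (0 < F a0) by (apply H; left; auto).
  assert (0 <= fold_right Rplus 0 (map F l)).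
  { apply (lsum_nonneg l F). intros; left; apply H; right; auto. }
  lra. Qed.

Lemma lsum_swap {A B} (l1 : list A) (l2 : list B) (F : A -> B -> R) :
  lsum l1 (fun x => lsum l2 (F x)) = lsum l2 (fun y => lsum l1 (fun x => F x y)).
Proof. induction l1; simpl.
  - symmetry. apply lsum_zero. intros; reflexivity.
  - rewrite lsum_cons, IHl1, <- lsum_plus. apply lsum_ext_in. intros; reflexivity. Qed.

Definition decP (P : Prop) : bool := if excluded_middle_informative P then true else false.

Lemma lsum_ind {A} (l : list A) (a : A) c : NoDup l ->
  lsum l (fun x => if excluded_middle_informative (x = a) then c else 0) =
  if excluded_middle_informative (In a l) then c else 0.
Proof. induction l; intros ND; simpl.
  - destruct (excluded_middle_informative False); [contradiction|reflexivity].
  - inversion ND; subst. rewrite lsum_cons, IHl by auto.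
    destruct (excluded_middle_informative (a0 = a)) as [e|e];
    destruct (excluded_middle_informative (In a l)) as [i|i];
    destruct (excluded_middle_informative (a0 = a \/ In a l)) as [j|j]; subst; try tauto; try lra.
Qed.

Lemma lsum_support {A} (l1 l2 : list A) F : NoDup l1 -> NoDup l2 ->
  (forall y, In y l1 -> ~ In y l2 -> F y = 0) ->
  (forall y, In y l2 -> ~ In y l1 -> F y = 0) ->
  lsum l1 F = lsum l2 F.
Proof. intros N1 N2 H1 H2.
  transitivity (lsum l1 (fun x => lsum l2 (fun y => if excluded_middle_informative (y = x) then F x else 0))).
  { apply lsum_ext_in. intros x Hx. rewrite lsum_ind by auto.
    destruct (excluded_middle_informative (In x l2)); auto. }
  rewrite lsum_swap. apply lsum_ext_in. intros y Hy.
  transitivity (lsum l1 (fun x => if excluded_middle_informative (x = y) then F y else 0)).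
  { apply lsum_ext_in. intros x _. destruct (excluded_middle_informative (y = x)), (excluded_middle_informative (x = y)); subst; tauto. }
  rewrite lsum_ind by auto. destruct (excluded_middle_informative (In y l1)); auto.
  symmetry; apply H2; auto.
Qed.

Lemma lsum_nat_ind {A} (l : list A) (g : A -> nat) k c : NoDup l ->
  (forall a b, g a = g b -> a = b) ->
  lsum l (fun x => if Nat.eqb (g x) k then c else 0) =
  if excluded_middle_informative (exists a, In a l /\ g a = k) then c else 0.
Proof. intros ND Hg.
  destruct (excluded_middle_informative (exists a, In a l /\ g a = k)) as [[a [Ha Hk]]|Hn].
  - transitivity (lsum l (fun x => if excluded_middle_informative (x = a) then c else 0)).
    2:{ rewrite (lsum_ind l a c ND). destruct (excluded_middle_informative (In a l)); [auto|contradiction]. }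
    apply lsum_ext_in. intros x Hx. destruct (Nat.eqb_spec (g x) k), (excluded_middle_informative (x = a)); subst; auto.
    + exfalso; apply n; apply Hg; auto.
    + contradiction.
  - apply lsum_zero. intros x Hx. destruct (Nat.eqb_spec (g x) k); auto. exfalso; apply Hn; eauto.
Qed.

Lemma walk_snoc (G : wgraph) x y z k : walk G x y k -> 0 < wt G y z -> walk G x z (S k).
Proof. induction 1; intros Hw.
  - apply walk_cons with z; auto. constructor.
  - apply walk_cons with y; auto. Qed.

Lemma walk_rev (G : wgraph) : (forall x y, wt G x y = wt G y x) ->
  forall x y k, walk G x y k -> walk G y x k.
Proof. intros Hs. induction 1.
  - constructor.
  - apply walk_snoc with y; auto. rewrite Hs; auto. Qed.

Lemma nat_min (P : nat -> Prop) : (exists k, P k) -> exists k, P k /\ forall k', P k' -> (k <= k')%nat.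
Proof. intros [k Hk]. revert Hk. induction k as [k IH] using (well_founded_induction lt_wf). intros Hk.
  destruct (classic (exists k', P k' /\ (k' < k)%nat)) as [[k' [H1 H2]]|Hn].
  - apply (IH k' H2 H1).
  - exists k. split; auto. intros k' Hk'. destruct (Nat.le_gt_cases k k'); auto. exfalso; apply Hn; eauto. Qed.

Lemma dist_spec (G : wgraph) : connected G -> forall x y, is_dist G x y (dist G x y).
Proof. intros HC x y. unfold dist. apply epsilon_spec.
  destruct (nat_min (walk G x y)) as [k [H1 H2]]; [apply HC|]. exists k; split; auto. Qed.

Lemma is_dist_unique (G : wgraph) x y a b : is_dist G x y a -> is_dist G x y b -> a = b.
Proof. intros [H1 H2] [H3 H4]. specialize (H2 _ H3). specialize (H4 _ H1). lia. Qed.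

Lemma dist_sym (G : wgraph) : connected G -> (forall x y, wt G x y = wt G y x) ->
  forall x y, dist G x y = dist G y x.
Proof. intros HC Hs x y. apply (is_dist_unique G x y); [apply dist_spec; auto|].
  destruct (dist_spec G HC y x) as [H1 H2]. split.
  - apply walk_rev; auto.
  - intros k' Hk. apply H2. apply walk_rev; auto. Qed.

Lemma dist_edge (G : wgraph) : connected G -> (forall x y, wt G x y = wt G y x) ->
  forall x y z, 0 < wt G x y -> (dist G y z <= S (dist G x z))%nat.
Proof. intros HC Hs x y z H. destruct (dist_spec G HC y z) as [_ H2]. apply H2.
  apply walk_cons with x. rewrite Hs; auto. apply dist_spec; auto. Qed.

Lemma dist_refl (G : wgraph) : connected G -> forall x, dist G x x = 0%nat.
Proof. intros HC x. destruct (dist_spec G HC x x) as [_ H2]. specialize (H2 0%nat (walk_nil G x)). lia. Qed.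

Lemma dist_zero (G : wgraph) : connected G -> forall x y, dist G x y = 0%nat -> x = y.
Proof. intros HC x y H. destruct (dist_spec G HC x y) as [H1 _]. rewrite H in H1. inversion H1; auto. Qed.

Lemma dist_pred (G : wgraph) : connected G -> (forall x y, wt G x y = wt G y x) ->
  forall x z k, dist G x z = S k -> exists a, 0 < wt G x a /\ dist G a z = k.
Proof. intros HC Hs x z k H. destruct (dist_spec G HC x z) as [H1 H2]. rewrite H in H1.
  inversion H1 as [|x' y k' z' Hxy Hw]; subst. exists y. split; auto.
  destruct (dist_spec G HC y z) as [_ H4]. specialize (H4 _ Hw).
  pose proof (dist_edge G HC Hs y x z) as H5. rewrite Hs in H5. specialize (H5 Hxy). lia. Qed.

Lemma level_exists (G : wgraph) (x0 : vtx G) : connected G -> (forall x y, wt G x y = wt G y x) ->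
  forall n y, dist G y x0 = n -> forall i, (i <= n)%nat -> exists z, dist G z x0 = i.
Proof. intros HC Hs n. induction n; intros y Hy i Hi.
  - exists y. lia.
  - destruct (Nat.eq_dec i (S n)). { exists y; lia. }
    destruct (dist_pred G HC Hs y x0 n Hy) as [a [_ Ha]]. apply (IHn a Ha). lia. Qed.

Lemma nbrs_spec (G : wgraph) : locally_finite G -> forall x, nbr_list_spec G x (nbrs G x).
Proof. intros HL x. unfold nbrs. apply epsilon_spec. apply HL. Qed.

Definition vdec {T : Type} (x y : T) : {x = y} + {x <> y} := excluded_middle_informative (x = y).

Lemma sphere_ok (G : wgraph) (x0 : vtx G) : connected G -> (forall x y, wt G x y = wt G y x) ->
  locally_finite G -> forall i, sphere_spec G x0 i (sphere G x0 i).
Proof. intros HC Hs HL i. unfold sphere. apply epsilon_spec. induction i.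
  - exists [x0]. split. { constructor; [simpl; auto|constructor]. }
    intros y; simpl; split.
    + intros [<-|[]]. apply dist_refl; auto.
    + intros H; left. apply dist_zero; auto.
  - destruct IHi as [l [Hnd Hl]].
    exists (nodup vdec (filter (fun y => Nat.eqb (dist G x0 y) (S i)) (concat (map (nbrs G) l)))).
    split; [apply NoDup_nodup|]. intros y. rewrite nodup_In, filter_In, in_concat. split.
    + intros [_ H]. apply Nat.eqb_eq; auto.
    + intros H. split; [|apply Nat.eqb_eq; auto].
      rewrite dist_sym in H by auto.
      destruct (dist_pred G HC Hs y x0 i H) as [a [Ha Ha2]].
      exists (nbrs G a). split.
      * apply in_map. apply Hl. rewrite dist_sym by auto. auto.
      * apply (nbrs_spec G HL a). rewrite Hs; auto.
Qed.

Definition pt (G : wgraph) (x0 : vtx G) (x : vtx G) : VP G x0 :=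
  exist _ (dist G x0 x) (ex_intro _ x (le_n _)).
Definition lift (G : wgraph) (x0 : vtx G) (f : VP G x0 -> R) (x : vtx G) : R := f (pt G x0 x).
Definition fN (G : wgraph) (x0 : vtx G) (f : VP G x0 -> R) (k : nat) : R :=
  match excluded_middle_informative (exists y, (k <= dist G x0 y)%nat) with
  | left p => f (exist _ k p) | right _ => 0 end.
Definition rep (G : wgraph) (x0 : vtx G) (i : VP G x0) : vtx G :=
  epsilon (inhabits x0) (fun x => dist G x0 x = proj1_sig i).

Lemma fN_VP G x0 f (j : VP G x0) : fN G x0 f (proj1_sig j) = f j.
Proof. unfold fN. destruct j as [k p]; simpl.
  destruct (excluded_middle_informative _) as [q|q]; [|contradiction].
  f_equal. apply subset_eq_compat; auto. Qed.

Lemma fN_lift G x0 f y : fN G x0 f (dist G x0 y) = lift G x0 f y.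
Proof. apply (fN_VP G x0 f (pt G x0 y)). Qed.

Lemma rep_spec G x0 : connected G -> (forall x y, wt G x y = wt G y x) ->
  forall i, dist G x0 (rep G x0 i) = proj1_sig i.
Proof. intros HC Hs [k [y Hy]]. unfold rep; simpl. apply epsilon_spec.
  destruct (level_exists G x0 HC Hs (dist G y x0) y eq_refl k) as [z Hz].
  { rewrite dist_sym by auto; auto. }
  exists z. rewrite dist_sym by auto. auto. Qed.

Lemma pt_rep G x0 : connected G -> (forall x y, wt G x y = wt G y x) ->
  forall i, pt G x0 (rep G x0 i) = i.
Proof. intros HC Hs i. pose proof (rep_spec G x0 HC Hs i) as H.
  unfold pt. destruct i as [k p]. apply subset_eq_compat. auto. Qed.

Lemma lapG G x0 : is_weighted_graph G -> locally_finite G -> connected G ->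
  forall f x, lap G (lift G x0 f) x =
    dplus G x0 x * (fN G x0 f (S (dist G x x0)) - fN G x0 f (dist G x x0)) +
    dminus G x0 x * (fN G x0 f (pred (dist G x x0)) - fN G x0 f (dist G x x0)).
Proof. intros [_ [Hnn [Hs [H0 Hm]]]] HL HC f x. unfold lap, dplus, dminus.
  set (i := dist G x x0). set (a := fN G x0 f (S i) - fN G x0 f i).
  set (b := fN G x0 f (pred i) - fN G x0 f i).
  pose proof (Hm x) as Hmx.
  rewrite (lsum_ext_in _ _ (fun y => ms G x * a * (if Nat.ltb i (dist G y x0) then wt G y x / ms G x else 0)
     + ms G x * b * (if Nat.ltb (dist G y x0) i then wt G y x / ms G x else 0))).
  { rewrite lsum_plus, !lsum_scal. field. lra. }
  intros y Hy. apply (nbrs_spec G HL x) in Hy.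
  pose proof (dist_edge G HC Hs x y x0 Hy) as E1.
  pose proof (dist_edge G HC Hs y x x0 ltac:(rewrite Hs; auto)) as E2.
  fold i in E1, E2.
  rewrite <- !fN_lift. rewrite (dist_sym G HC Hs x0 y), (dist_sym G HC Hs x0 x). fold i.
  rewrite (Hs y x).
  destruct (Nat.ltb_spec i (dist G y x0)); destruct (Nat.ltb_spec (dist G y x0) i).
  - lia.
  - replace (dist G y x0) with (S i) by lia. unfold a. field. lra.
  - replace (dist G y x0) with (pred i) by lia. unfold b. field. lra.
  - replace (dist G y x0) with i by lia. ring.
Qed.

Definition GPcands G x0 (i : VP G x0) : list (VP G x0) :=
  (match excluded_middle_informative (exists y, (S (proj1_sig i) <= dist G x0 y)%nat) with
   | left p => [exist _ (S (proj1_sig i)) p] | right _ => [] end) ++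
  (match excluded_middle_informative (exists y, (pred (proj1_sig i) <= dist G x0 y)%nat) with
   | left p => [exist _ (pred (proj1_sig i)) p] | right _ => [] end).

Lemma VP_eq G x0 (i j : VP G x0) : proj1_sig i = proj1_sig j -> i = j.
Proof. destruct i, j; simpl; intros; apply subset_eq_compat; auto. Qed.

Lemma wtGP_eq G x0 (i j : VP G x0) : wt (GP G x0) i j =
  if orb (Nat.eqb (S (proj1_sig i)) (proj1_sig j)) (Nat.eqb (S (proj1_sig j)) (proj1_sig i))
  then wset G (sphere G x0 (proj1_sig i)) (sphere G x0 (proj1_sig j)) else 0.
Proof. reflexivity. Qed.

Lemma GP_lf G x0 : forall i, exists l, nbr_list_spec (GP G x0) i l.
Proof. intros i.
  exists (filter (fun j => decP (0 < wt (GP G x0) i j)) (GPcands G x0 i)). split.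
  - apply NoDup_filter. unfold GPcands.
    destruct (excluded_middle_informative (exists y, (S (proj1_sig i) <= dist G x0 y)%nat));
    destruct (excluded_middle_informative (exists y, (pred (proj1_sig i) <= dist G x0 y)%nat)); simpl;
    repeat constructor; auto.
    intros [H|[]]. apply (f_equal (@proj1_sig _ _)) in H. simpl in H. lia.
  - intros j. rewrite filter_In. unfold decP. split.
    + intros H. destruct (excluded_middle_informative (0 < wt (GP G x0) i j)); [|contradiction].
      split; auto. rewrite wtGP_eq in H. revert H.
      destruct (Nat.eqb_spec (S (proj1_sig i)) (proj1_sig j)); destruct (Nat.eqb_spec (S (proj1_sig j)) (proj1_sig i));
        simpl; intro H; try lra; try lia; unfold GPcands; apply in_or_app.
      * left. destruct (excluded_middle_informative (exists y, (S (proj1_sig i) <= dist G x0 y)%nat)) as [p|p].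
        { left. apply VP_eq. simpl. auto. }
        exfalso. apply p. destruct j as [k [y Hy]]. simpl in *. exists y. lia.
      * right. destruct (excluded_middle_informative (exists y, (pred (proj1_sig i) <= dist G x0 y)%nat)) as [p|p].
        { left. apply VP_eq. simpl. lia. }
        exfalso. apply p. destruct i as [k [y Hy]]. simpl in *. exists y. lia.
    + intros [_ H]. destruct (excluded_middle_informative (0 < wt (GP G x0) i j)); auto. discriminate.
Qed.

Lemma GP_nbrs G x0 : forall i, nbr_list_spec (GP G x0) i (nbrs (GP G x0) i).
Proof. intros i. unfold nbrs. apply epsilon_spec. apply GP_lf. Qed.

Lemma row_plus G x0 : is_weighted_graph G -> locally_finite G -> connected G ->
  forall x k, dist G x x0 = k ->
  lsum (sphere G x0 (S k)) (fun y => wt G x y) = ms G x * dplus G x0 x.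
Proof. intros [_ [Hnn [Hs [H0 Hm]]]] HL HC x k Hk. unfold dplus. rewrite <- lsum_scal.
  pose proof (Hm x) as Hmx. rewrite Hk.
  destruct (sphere_ok G x0 HC Hs HL (S k)) as [Nd Hsp].
  destruct (nbrs_spec G HL x) as [Nn Hn].
  transitivity (lsum (sphere G x0 (S k)) (fun y => if Nat.ltb k (dist G y x0) then wt G x y else 0)).
  { apply lsum_ext_in. intros y Hy. apply Hsp in Hy. rewrite dist_sym in Hy by auto. rewrite Hy.
    destruct (Nat.ltb_spec k (S k)); [auto|lia]. }
  transitivity (lsum (nbrs G x) (fun y => if Nat.ltb k (dist G y x0) then wt G x y else 0)).
  { apply lsum_support; auto.
    - intros y _ Hy. rewrite <- Hn in Hy. pose proof (Hnn x y). destruct (Nat.ltb _ _); lra.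
    - intros y Hy Hy2. rewrite Hsp in Hy2. apply Hn in Hy.
      pose proof (dist_edge G HC Hs x y x0 Hy). rewrite dist_sym in Hy2 by auto.
      destruct (Nat.ltb_spec k (dist G y x0)); [lia|auto]. }
  apply lsum_ext_in. intros y _. rewrite (Hs y x). destruct (Nat.ltb _ _); field; lra.
Qed.

Lemma row_minus G x0 : is_weighted_graph G -> locally_finite G -> connected G ->
  forall x k, dist G x x0 = S k ->
  lsum (sphere G x0 k) (fun y => wt G x y) = ms G x * dminus G x0 x.
Proof. intros [_ [Hnn [Hs [H0 Hm]]]] HL HC x k Hk. unfold dminus. rewrite <- lsum_scal.
  pose proof (Hm x) as Hmx. rewrite Hk.
  destruct (sphere_ok G x0 HC Hs HL k) as [Nd Hsp].
  destruct (nbrs_spec G HL x) as [Nn Hn].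
  transitivity (lsum (sphere G x0 k) (fun y => if Nat.ltb (dist G y x0) (S k) then wt G x y else 0)).
  { apply lsum_ext_in. intros y Hy. apply Hsp in Hy. rewrite dist_sym in Hy by auto. rewrite Hy.
    destruct (Nat.ltb_spec k (S k)); [auto|lia]. }
  transitivity (lsum (nbrs G x) (fun y => if Nat.ltb (dist G y x0) (S k) then wt G x y else 0)).
  { apply lsum_support; auto.
    - intros y _ Hy. rewrite <- Hn in Hy. pose proof (Hnn x y). destruct (Nat.ltb _ _); lra.
    - intros y Hy Hy2. rewrite Hsp in Hy2. apply Hn in Hy.
      pose proof (dist_edge G HC Hs y x x0 ltac:(rewrite Hs; auto)). rewrite dist_sym in Hy2 by auto.
      destruct (Nat.ltb_spec (dist G y x0) (S k)); [lia|auto]. }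
  apply lsum_ext_in. intros y _. rewrite (Hs y x). destruct (Nat.ltb _ _); field; lra.
Qed.

Lemma wset_plus G x0 : is_weighted_graph G -> locally_finite G -> connected G ->
  weakly_spherically_symmetric G x0 -> forall i : VP G x0,
  wset G (sphere G x0 (proj1_sig i)) (sphere G x0 (S (proj1_sig i))) =
  mset G (sphere G x0 (proj1_sig i)) * dplus G x0 (rep G x0 i).
Proof. intros HW HL HC HS i. pose proof HW as [_ [Hnn [Hs [H0 Hm]]]].
  unfold wset, mset. rewrite <- lsum_scal_r. apply lsum_ext_in. intros x Hx.
  destruct (sphere_ok G x0 HC Hs HL (proj1_sig i)) as [_ Hsp]. apply Hsp in Hx.
  rewrite dist_sym in Hx by auto.
  rewrite (row_plus G x0 HW HL HC x _ Hx). f_equal.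
  apply HS. rewrite Hx, dist_sym by auto. rewrite rep_spec by auto. auto.
Qed.

Lemma wset_minus G x0 : is_weighted_graph G -> locally_finite G -> connected G ->
  weakly_spherically_symmetric G x0 -> forall (i : VP G x0) k, proj1_sig i = S k ->
  wset G (sphere G x0 (proj1_sig i)) (sphere G x0 k) =
  mset G (sphere G x0 (proj1_sig i)) * dminus G x0 (rep G x0 i).
Proof. intros HW HL HC HS i k Hik. pose proof HW as [_ [Hnn [Hs [H0 Hm]]]].
  unfold wset, mset. rewrite <- lsum_scal_r. apply lsum_ext_in. intros x Hx.
  destruct (sphere_ok G x0 HC Hs HL (proj1_sig i)) as [_ Hsp]. apply Hsp in Hx.
  rewrite dist_sym in Hx by auto. rewrite Hik in Hx.
  rewrite (row_minus G x0 HW HL HC x _ Hx). f_equal.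
  apply HS. rewrite Hx, dist_sym by auto. rewrite rep_spec by auto. auto.
Qed.

Lemma mset_pos G x0 : is_weighted_graph G -> locally_finite G -> connected G ->
  forall i : VP G x0, 0 < mset G (sphere G x0 (proj1_sig i)).
Proof. intros [_ [Hnn [Hs [H0 Hm]]]] HL HC i. unfold mset.
  destruct (sphere_ok G x0 HC Hs HL (proj1_sig i)) as [_ Hsp].
  apply lsum_pos with (rep G x0 i). { apply Hsp. apply rep_spec; auto. }
  intros; apply Hm. Qed.

Lemma wset_nonneg G : is_weighted_graph G -> forall a b, 0 <= wset G a b.
Proof. intros [_ [Hnn _]] a b. unfold wset. apply lsum_nonneg. intros. apply lsum_nonneg. intros; apply Hnn. Qed.

Lemma lapGP G x0 : is_weighted_graph G -> locally_finite G -> connected G ->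
  weakly_spherically_symmetric G x0 -> forall (f : VP G x0 -> R) (i : VP G x0),
  lap (GP G x0) f i =
    dplus G x0 (rep G x0 i) * (fN G x0 f (S (proj1_sig i)) - fN G x0 f (proj1_sig i)) +
    dminus G x0 (rep G x0 i) * (fN G x0 f (pred (proj1_sig i)) - fN G x0 f (proj1_sig i)).
Proof. intros HW HL HC HS f i. pose proof HW as [_ [Hnn [Hs [H0 Hm]]]].
  set (k := proj1_sig i).
  set (a := fN G x0 f (S k) - fN G x0 f k). set (b := fN G x0 f (pred k) - fN G x0 f k).
  set (A := wset G (sphere G x0 k) (sphere G x0 (S k)) * a).
  set (B := wset G (sphere G x0 k) (sphere G x0 (pred k)) * b).
  destruct (GP_nbrs G x0 i) as [Nd Hn].
  assert (Hinj : forall u v : VP G x0, proj1_sig u = proj1_sig v -> u = v) by apply VP_eq.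
  unfold lap.
  change (ms (GP G x0) i) with (mset G (sphere G x0 k)).
  pose proof (mset_pos G x0 HW HL HC i) as Hmp. fold k in Hmp.
  rewrite (lsum_ext_in _ _ (fun j : vtx (GP G x0) => (if Nat.eqb (proj1_sig j) (S k) then A else 0) +
                                    (if Nat.eqb (S (proj1_sig j)) k then B else 0))).
  2:{ intros j _. rewrite wtGP_eq. fold k.
      rewrite <- (fN_VP G x0 f j), <- (fN_VP G x0 f i). fold k.
      destruct (Nat.eqb_spec (S k) (proj1_sig j)); destruct (Nat.eqb_spec (S (proj1_sig j)) k);
      destruct (Nat.eqb_spec (proj1_sig j) (S k)); simpl; try lia.
      - rewrite <- e. unfold A, a. ring.
      - replace (proj1_sig j) with (pred k) by lia. unfold B, b. ring.
      - ring. }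
  rewrite lsum_plus.
  assert (E1 : lsum (nbrs (GP G x0) i) (fun j : vtx (GP G x0) => if Nat.eqb (proj1_sig j) (S k) then A else 0) = A).
  { rewrite lsum_nat_ind by auto.
    destruct (excluded_middle_informative _) as [_|Hno]; [auto|].
    destruct (excluded_middle_informative (exists y, (S k <= dist G x0 y)%nat)) as [p|p].
    - set (j0 := exist (fun n => exists y, (n <= dist G x0 y)%nat) (S k) p).
      assert (~ 0 < wt (GP G x0) i j0). { rewrite Hn. intros Hj. apply Hno. exists j0; auto. }
      rewrite wtGP_eq in H. simpl in H. fold k in H. rewrite Nat.eqb_refl in H. simpl in H.
      pose proof (wset_nonneg G HW (sphere G x0 k) (sphere G x0 (S k))).
      unfold A. replace (wset G (sphere G x0 k) (sphere G x0 (S k))) with 0 by lra. ring.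
    - destruct (sphere_ok G x0 HC Hs HL (S k)) as [_ Hsp].
      destruct (sphere G x0 (S k)) as [|y l] eqn:E.
      + unfold A, wset. try rewrite E. rewrite lsum_zero; [ring|]. intros; reflexivity.
      + exfalso. apply p. exists y. assert (In y (y :: l)) by (left; auto). apply Hsp in H. lia. }
  assert (Hi : exists y, (k <= dist G x0 y)%nat) by exact (proj2_sig i).
  assert (E2 : lsum (nbrs (GP G x0) i) (fun j : vtx (GP G x0) => if Nat.eqb (S (proj1_sig j)) k then B else 0) =
               if Nat.eqb k 0 then 0 else B).
  { rewrite (lsum_nat_ind _ (fun j : vtx (GP G x0) => S (proj1_sig j))); auto.
    destruct (Nat.eqb_spec k 0) as [Hk0|Hk0].
    - destruct (excluded_middle_informative _) as [[u [_ Hu]]|_]; [lia|auto].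
    - destruct (excluded_middle_informative _) as [_|Hno]; [auto|].
      assert (p : exists y, (pred k <= dist G x0 y)%nat) by (destruct Hi as [y Hy]; exists y; lia).
      set (j0 := exist (fun n => exists y, (n <= dist G x0 y)%nat) (pred k) p).
      assert (Hj : ~ 0 < wt (GP G x0) i j0).
      { rewrite Hn. intros Hj. apply Hno. exists j0; split; auto. change (S (pred k) = k). lia. }
      rewrite wtGP_eq in Hj. change (proj1_sig j0) with (pred k) in Hj. fold k in Hj.
      rewrite (proj2 (Nat.eqb_eq (S (pred k)) k)) in Hj by lia. rewrite Bool.orb_true_r in Hj.
      pose proof (wset_nonneg G HW (sphere G x0 k) (sphere G x0 (pred k))).
      unfold B. replace (wset G (sphere G x0 k) (sphere G x0 (pred k))) with 0 by lra. ring. }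
  rewrite E1, E2.
  unfold A. pose proof (wset_plus G x0 HW HL HC HS i) as W. fold k in W. rewrite W.
  destruct (Nat.eqb_spec k 0) as [Hk0|Hk0].
  - assert (Hb : b = 0) by (unfold b; rewrite Hk0; simpl; ring). rewrite Hb. field. lra.
  - unfold B. pose proof (wset_minus G x0 HW HL HC HS i (pred k) ltac:(fold k; lia)) as W2. fold k in W2. rewrite W2. field. lra.
Qed.

Lemma Kpt G x0 : is_weighted_graph G -> locally_finite G -> connected G ->
  weakly_spherically_symmetric G x0 -> forall (g : VP G x0 -> R) x,
  lap (GP G x0) g (pt G x0 x) = lap G (lift G x0 g) x.
Proof. intros HW HL HC HS g x. pose proof HW as [_ [Hnn [Hs [H0 Hm]]]].
  rewrite lapGP by auto. rewrite lapG by auto. simpl proj1_sig.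
  rewrite (dist_sym G HC Hs x0 x).
  assert (Hd : dist G (rep G x0 (pt G x0 x)) x0 = dist G x x0).
  { rewrite dist_sym, rep_spec by auto. simpl. apply dist_sym; auto. }
  destruct (HS _ _ Hd) as [_ [Hm' Hp']]. rewrite Hm', Hp'. reflexivity. Qed.

Lemma Gampt G x0 : is_weighted_graph G -> locally_finite G -> connected G ->
  weakly_spherically_symmetric G x0 -> forall (g h : VP G x0 -> R) x,
  Gam (GP G x0) g h (pt G x0 x) = Gam G (lift G x0 g) (lift G x0 h) x.
Proof. intros HW HL HC HS g h x. unfold Gam. rewrite !Kpt by auto. reflexivity. Qed.

Lemma Gam2pt G x0 : is_weighted_graph G -> locally_finite G -> connected G ->
  weakly_spherically_symmetric G x0 -> forall (g : VP G x0 -> R) x,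
  Gam2 (GP G x0) g g (pt G x0 x) = Gam2 G (lift G x0 g) (lift G x0 g) x.
Proof. intros HW HL HC HS g x. unfold Gam2. rewrite Kpt by auto. rewrite !Gampt by auto.
  assert (E1 : lift G x0 (Gam (GP G x0) g g) = Gam G (lift G x0 g) (lift G x0 g)).
  { apply functional_extensionality. intros z. unfold lift at 1. apply Gampt; auto. }
  assert (E2 : lift G x0 (lap (GP G x0) g) = lap G (lift G x0 g)).
  { apply functional_extensionality. intros z. unfold lift at 1. apply Kpt; auto. }
  rewrite E1, E2. reflexivity. Qed.

Theorem corollary4 (G : wgraph) (x0 : vtx G) (K : R) (n : option R) :
  is_weighted_graph G ->
  locally_finite G ->
  connected G ->
  weakly_spherically_symmetric G x0 ->
  dim_ok n ->
  CD G K n ->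
  CD (GP G x0) K n.
Proof.
  intros HW HL HC HS Hn HCD f i. pose proof HW as [_ [Hnn [Hs [H0 Hm]]]].
  change (vtx (GP G x0)) with (VP G x0) in i.
  rewrite <- (pt_rep G x0 HC Hs i).
  rewrite Gam2pt, Kpt, Gampt by auto. apply HCD.
Qed.
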